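(* For every standard function $f$ and every $x>0$, $$f(x)\ \ge\ f(0)\,|x-1|,$$ where $f(0):=\lim_{x\to0^+}f(x)$.
   Context: A function $f:(0,\infty)\to(0,\infty)$ is called standard if it is operator monotone, $f(1)=1$ and $f(t)=tf(t^{-1})$ for all $t>0$. (Such $f$ is increasing, so $f(0)=\lim_{x\to0^+}f(x)\ge0$ exists.) *)

(* Defs.v *)
From HB Require Import structures.
From mathcomp Require Import all_boot all_order all_algebra.
From mathcomp Require Import complex.
From mathcomp Require Import all_classical all_reals all_analysis.
Set Implicit Arguments. Unset Strict Implicit. Unset Printing Implicit Defensive.
Import Order.TTheory GRing.Theory Num.Theory.
Local Open Scope ring_scope.

Section Defs.
Variable R : realType.
Local Notation C := (complex R).

Definition adjmx n (A : 'M[C]_n) : 'M[C]_n := (map_mx Num.conj A)^T.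

Definition unitary_mx n (U : 'M[C]_n) : Prop := U *m adjmx U = 1%:M.

Definition loewner_le n (A B : 'M[C]_n) : Prop :=
  forall v : 'cV[C]_n, 0 <= ((map_mx Num.conj v)^T *m (B - A) *m v) 0 0.

Definition herm_of n (U : 'M[C]_n) (d : 'rV[R]_n) : 'M[C]_n :=
  U *m diag_mx (map_mx (fun x : R => Complex x 0) d) *m adjmx U.

(* Functional calculus f(U diag(d) U^* ) := U diag(f(d)) U^*  (well defined,
   independent of the spectral decomposition).  f is operator monotone on
   (0,oo): for all n and positive definite A <= B, f(A) <= f(B). *)
Definition operator_monotone (f : R -> R) : Prop :=
  forall (n : nat) (U V : 'M[C]_n) (d e : 'rV[R]_n),
    unitary_mx U -> unitary_mx V ->
    (forall i, 0 < d 0 i) -> (forall i, 0 < e 0 i) ->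
    loewner_le (herm_of U d) (herm_of V e) ->
    loewner_le (herm_of U (map_mx f d)) (herm_of V (map_mx f e)).

(* standard function, with f : (0,oo) -> (0,oo) represented by f : R -> R
   whose values outside (0,oo) are irrelevant *)
Definition standard (f : R -> R) : Prop :=
  [/\ operator_monotone f,
      (forall t, 0 < t -> 0 < f t),
      f 1 = 1 &
      (forall t, 0 < t -> f t = t * f t^-1)].

End Defs.

(* Main.v *)
Require Import Defs.
From HB Require Import structures.
From mathcomp Require Import all_boot all_order all_algebra.
From mathcomp Require Import complex.
From mathcomp Require Import all_classical all_reals all_analysis.
From mathcomp Require Import lra.
Import Order.TTheory GRing.Theory Num.Theory.
Local Open Scope classical_set_scope.
Local Open Scope ring_scope.

Section S.
Variable R : realType.
Local Notation C := (complex R).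

Lemma herm1 (c : R) : herm_of (1 : 'M[C]_1) (const_mx c) = (real_complex R c)%:M.
Proof.
  apply/matrixP => i j.
  rewrite /herm_of /adjmx !ord1 !mxE !big_ord1 !mxE /= !big_ord1 !mxE /=.
  by rewrite conjC1 !mulr1 !mul1r.
Qed.

Lemma loew1 (a b : R) :
  loewner_le (herm_of (1 : 'M[C]_1) (const_mx a)) (herm_of 1 (const_mx b)) <-> a <= b.
Proof.
rewrite !herm1 /loewner_le; split.
  move=> /(_ (const_mx 1)); rewrite !mxE !big_ord1 !mxE !big_ord1 !mxE /=.
  rewrite !mulr1n conjC1 mulr1 mul1r -rmorphB lecR subr_ge0. done.
move=> ab v; rewrite !mxE !big_ord1 !mxE !big_ord1 !mxE /= !mulr1n -rmorphB.
rewrite mulrC mulrA; apply: mulr_ge0; last by rewrite lecR subr_ge0.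
exact: mul_conjC_ge0.
Qed.
Lemma unit1 : unitary_mx (1 : 'M[C]_1).
Proof.
rewrite /unitary_mx /adjmx; apply/matrixP => i j.
rewrite !ord1 !mxE big_ord1 !mxE /=.
by rewrite conjC1 mulr1.
Qed.

Lemma mono1 (f : R -> R) : operator_monotone f ->
  forall a b, 0 < a -> a <= b -> f a <= f b.
Proof.
move=> om a b a0 ab.
have mc : forall c, map_mx f (const_mx c : 'rV[R]_1) = const_mx (f c).
  by move=> c; apply/matrixP => i j; rewrite !mxE.
apply/(loew1 (f a) (f b)); rewrite -!mc.
apply: om; [exact: unit1|exact: unit1| move=> i; rewrite mxE //
  | move=> i; rewrite mxE; exact: (lt_le_trans a0 ab)|].
exact/loew1.
Qed.
End S.

Theorem lemma4 (R : realType) (f : R -> R) :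
  standard f ->
  forall x : R, 0 < x ->
    f x >= lim (f t @[t --> (0 : R)^'+] : set_system R^o) * `|x - 1|.
Proof.
move=> [om pos f1 finv] x x0.
have mono := @mono1 R f om.
have cv : cvg (f t @[t --> (0 : R)^'+] : set_system R^o).
  apply: nondecreasing_at_right_is_cvgr.
    apply: nearW; move=> y s t hs ht st; move: hs; rewrite in_itv /= => /andP[s0 _].
    exact: mono.
  apply: nearW; move=> y; exists 0 => z [t]; rewrite /= in_itv /= => /andP[t0 _] <-.
  exact/ltW/pos.
set L := lim _.
have L0 : 0 <= L.
  apply: limr_ge => //; near=> t; apply/ltW/pos.
  near: t; exact: nbhs_right_gt.
have Ly : forall y, 0 < y -> L <= f y.
  move=> y y0; apply: limr_le => //; near=> t; apply: mono.
    near: t; exact: nbhs_right_gt.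
  apply/ltW; near: t; exact: nbhs_right_lt.
have [x1|x1] := leP x 1.
  rewrite ler0_norm ?subr_le0 // opprB.
  have := Ly x x0; nra.
rewrite gtr0_norm ?subr_gt0 // finv //.
have := Ly x^-1; rewrite invr_gt0 => /(_ x0) H.
nra.
Unshelve. all: by end_near.
Qed.
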